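(* Let $X$ be a real Banach space and let $A \subset X$ be a compact set not containing the zero vector. Let $I$ be an index set with $m$ elements and $\{x_i : i \in I\} \subset S_X$. Then there exist $y_i \in \mathbb{R}^+ x_i$ and $r_i > 0$ with $\|y_i\| \ge r_i$ for all $i \in I$ such that $\{B(y_i, r_i)\}_{i \in I}$ covers $A$, if and only if for every selection $\phi$ of the subdifferential mapping $\partial\|\cdot\|$, the family $\{\phi(x_i)\}_{i \in I}$ positively separates points of $A$, i.e. $\sup_{i \in I} \phi(x_i)(x) > 0$ for every $x \in A$.
   Context: $\mathbb{R}^+ x_i = \{ t x_i : t > 0\}$; $B(c,r) = \{ z : \|c - z\| < r\}$. The subdifferential of the norm at $x \ne 0$ is $\partial\|x\| = \{ x^* \in S_{X^*} : x^*(x) = \|x\|\}$. A selection of $\partial\|\cdot\|$ is a map $\phi$ assigning to each non-zero $x$ an element $\phi(x) \in \partial\|x\|$. *)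

(* Defs.v *)
From HB Require Import structures.
From mathcomp Require Import all_boot all_order all_algebra.
From mathcomp Require Import all_classical all_reals all_analysis.
Set Implicit Arguments. Unset Strict Implicit. Unset Printing Implicit Defensive.
Import Order.TTheory GRing.Theory Num.Theory.
Import numFieldNormedType.Exports.
Local Open Scope classical_set_scope.
Local Open Scope ring_scope.

Definition is_dual_elt (R : realType) (X : normedModType R) (f : X -> R) : Prop :=
  (forall (a : R) (u v : X), f (a *: u + v) = a * f u + f v) /\ continuous f.

Definition dual_norm (R : realType) (X : normedModType R) (f : X -> R) : R :=
  sup [set `|f z| | z in [set z : X | `|z| <= 1]].

Definition in_dual_sphere (R : realType) (X : normedModType R) (f : X -> R) : Prop :=
  is_dual_elt f /\ dual_norm f = 1.

Definition subdiff_norm (R : realType) (X : normedModType R) (x : X) : set (X -> R) :=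
  [set f | in_dual_sphere f /\ f x = `|x|].

Definition subdiff_selection (R : realType) (X : normedModType R) (phi : X -> X -> R) : Prop :=
  forall x : X, x != 0 -> subdiff_norm x (phi x).

Definition oball (R : realType) (X : normedModType R) (c : X) (r : R) : set X :=
  [set z | `|c - z| < r].

(* Main.v *)
Require Import Defs.
From HB Require Import structures.
From mathcomp Require Import all_boot all_order all_algebra.
From mathcomp Require Import all_classical all_reals all_analysis.
From mathcomp Require Import lra.
Import Order.TTheory GRing.Theory Num.Theory.
Import numFieldNormedType.Exports.
Local Open Scope classical_set_scope.
Local Open Scope ring_scope.

Definition glin (R : realType) (V : lmodType R) (G : set (V * R)) :=
  forall a u r v s, G (u, r) -> G (v, s) -> G (a *: u + v, a * r + s).
Definition gfun (R : realType) (V : lmodType R) (G : set (V * R)) :=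
  forall v r s, G (v, r) -> G (v, s) -> r = s.
Definition gdom (R : realType) (V : lmodType R) (p : V -> R) (G : set (V * R)) :=
  forall v r, G (v, r) -> r <= p v.
Arguments glin {R V}. Arguments gfun {R V}. Arguments gdom {R V}.

Lemma p0_eq0 {R : realType} {V : lmodType R} (p : V -> R) :
  (forall u v, p (u + v) <= p u + p v) ->
  (forall t u, 0 < t -> t * p u <= p (t *: u)) -> p 0 = 0.
Proof.
move=> sub hom; apply/eqP; rewrite eq_le; apply/andP; split.
  have := hom 2 0 (ltr0Sn _ 1); rewrite scaler0 => h; lra.
have := sub 0 0; rewrite addr0 => h; lra.
Qed.

Lemma g00 {R : realType} {V : lmodType R} (G : set (V * R)) v r :
  glin G -> G (v, r) -> G (0, 0).
Proof.
move=> hl hv; have := hl (-1) _ _ _ _ hv hv.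
by rewrite scaleN1r addNr mulN1r addNr.
Qed.

Lemma extend_step {R : realType} {V : lmodType R} (p : V -> R) (A : set (V * R)) :
  (forall u v, p (u + v) <= p u + p v) ->
  (forall t u, 0 < t -> t * p u <= p (t *: u)) ->
  glin A -> gfun A -> gdom p A -> A (0, 0) ->
  forall w, ~ (exists r, A (w, r)) ->
  exists B, A `<` B /\ glin B /\ gfun B /\ gdom p B.
Proof.
move=> sub hom hl hf hd h00 w hw.
pose L := [set x | exists d s, A (d, s) /\ x = s - p (d - w)].
have key d1 s1 d2 s2 : A (d1, s1) -> A (d2, s2) ->
    s1 - p (d1 - w) <= p (d2 + w) - s2.
  move=> h1 h2; have := hd _ _ (hl 1 _ _ _ _ h1 h2); rewrite scale1r mul1r => h.
  have := sub (d1 - w) (d2 + w).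
  rewrite (_ : d1 - w + (d2 + w) = d1 + d2); last first.
    by rewrite addrACA addNr addr0.
  move=> h'; lra.
have L0 : L !=set0 by exists (0 - p (0 - w)), 0, 0.
have Lub : has_ubound L.
  by exists (p (0 + w) - 0) => x [d [s [hds ->]]]; exact: key.
pose c := sup L.
have cle d s : A (d, s) -> c <= p (d + w) - s.
  move=> hds; apply: ge_sup => // x [d' [s' [hds' ->]]]; exact: key.
have cge d s : A (d, s) -> s - p (d - w) <= c.
  by move=> hds; apply: ub_le_sup => //; exists d, s.
pose B := [set vr : V * R | exists d s t, A (d, s) /\ vr = (d + t *: w, s + t * c)].
exists B; split; [split|split; [|split]].
- move=> [v r] hvr; exists v, r, 0; split => //.
  by rewrite scale0r mul0r !addr0.
- move=> hBA; apply: hw; exists c.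
  apply: hBA; exists 0, 0, 1; split => //.
  by rewrite scale1r mul1r !add0r.
- move=> a _ _ _ _ [d1 [s1 [t1 [h1 [-> ->]]]]] [d2 [s2 [t2 [h2 [-> ->]]]]].
  exists (a *: d1 + d2), (a * s1 + s2), (a * t1 + t2); split.
    exact: hl.
  congr pair.
    by rewrite scalerDr scalerA addrACA -scalerDl.
  by rewrite mulrDr mulrA addrACA -mulrDl.
- move=> _ _ _ [d1 [s1 [t1 [h1 [-> ->]]]]] [d2 [s2 [t2 [h2 []]]]] e ->.
  have [t12|t12] := eqVneq t1 t2.
    subst t2; move/addIr: e => e; subst d2.
    by rewrite (hf _ _ _ h1 h2).
  exfalso; apply: hw.
  have h3 := hl (-1) _ _ _ _ h1 h2; rewrite scaleN1r mulN1r in h3.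
  have h4 := hl ((t1 - t2)^-1) _ _ _ _ h3 h00; rewrite addr0 addr0 in h4.
  exists ((t1 - t2)^-1 * (- s1 + s2)).
  suff -> : w = (t1 - t2)^-1 *: (- d1 + d2) by [].
  have e' : (t1 - t2) *: w = - d1 + d2.
    rewrite scalerBl; apply: (@addrI _ d1).
    by rewrite [RHS]addrA addrN add0r addrA e addrK.
  rewrite -e' scalerA mulVf ?scale1r //; by rewrite subr_eq0.
- move=> _ _ [d [s [t [hds [-> ->]]]]].
  have [tgt0|tlt0|->] := ltgtP t 0; last by rewrite scale0r mul0r !addr0; exact: hd.
  +
    pose k := (- t)^-1.
    have kp : 0 < k by rewrite invr_gt0 oppr_gt0.
    have h := cge _ _ (hl k _ _ _ _ hds h00); rewrite !addr0 in h.
    have hh := hom (- t) (k *: d - w); rewrite oppr_gt0 in hh; have {}hh := hh tgt0.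
    rewrite scalerBr scalerA mulrV ?scale1r ?unitfE ?oppr_eq0 ?lt_eqF // in hh.
    rewrite scaleNr opprK in hh.
    have e1 : - t * (k * s) = s by rewrite mulrA mulrV ?mul1r // unitfE oppr_eq0 lt_eqF.
    have : - t * (k * s - p (k *: d - w)) <= - t * c by rewrite ler_pM2l ?oppr_gt0.
    rewrite mulrBr e1 => h2; nra.
  + pose k := t^-1.
    have kp : 0 < k by rewrite invr_gt0.
    have h := cle _ _ (hl k _ _ _ _ hds h00); rewrite !addr0 in h.
    have hh := hom t (k *: d + w) tlt0.
    rewrite scalerDr scalerA mulrV ?scale1r ?unitfE ?gt_eqF // in hh.
    have e1 : t * (k * s) = s by rewrite mulrA mulrV ?mul1r // unitfE gt_eqF.
    have : t * c <= t * (p (k *: d + w) - k * s) by rewrite ler_pM2l.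
    rewrite mulrBr e1 => h2; nra.
Qed.

Lemma hahn_banach {R : realType} {V : lmodType R} (p : V -> R) :
  (forall u v, p (u + v) <= p u + p v) ->
  (forall t u, 0 < t -> t * p u <= p (t *: u)) ->
  forall v0, exists f : V -> R,
    (forall a u v, f (a *: u + v) = a * f u + f v) /\
    (forall v, f v <= p v) /\ f v0 = p v0.
Proof.
move=> sub hom v0.
have p0 := p0_eq0 p sub hom.
pose P := fun G : set (V * R) =>
  glin G /\ gfun G /\ gdom p G /\ (G = set0 \/ G (v0, p v0)).
have [A [[hl [hf [hd h0]]] hmax]] : exists A, P A /\ forall B, A `<` B -> ~ P B.
  apply: Zorn_bigcup => F FP Ftot; split; [|split; [|split]].
  - move=> a u r v s [G1 FG1 h1] [G2 FG2 h2].
    have [G12|G21] := Ftot _ _ FG1 FG2.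
      exists G2 => //; have [+ _] := FP _ FG2; apply => //; exact: (G12 _ h1).
    exists G1 => //; have [+ _] := FP _ FG1; apply => //; exact: (G21 _ h2).
  - move=> v r s [G1 FG1 h1] [G2 FG2 h2].
    have [G12|G21] := Ftot _ _ FG1 FG2.
      have [_ [+ _]] := FP _ FG2; apply; [exact: (G12 _ h1)|exact: h2].
    have [_ [+ _]] := FP _ FG1; apply; [exact: h1|exact: (G21 _ h2)].
  - move=> v r [G FG h]; have [_ [_ [+ _]]] := FP _ FG; exact.
  - have [[G [FG hG]]|nG] := pselect (exists G, F G /\ G (v0, p v0)).
      by right; exists G.
    left; apply/seteqP; split => // -[v r] [G FG hG].
    have [_ [_ [_ [e|e]]]] := FP _ FG.
      by rewrite e in hG.
    by exfalso; apply: nG; exists G.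
pose G0 := [set vr : V * R | exists t, vr = (t *: v0, t * p v0)].
have PG0 : P G0.
  split; [|split; [|split]].
  - move=> a _ _ _ _ [t1 [-> ->]] [t2 [-> ->]]; exists (a * t1 + t2).
    by rewrite scalerDl scalerA mulrDl mulrA.
  - move=> _ _ _ [t1 [-> ->]] [t2 [e ->]].
    have [->|v0n] := eqVneq v0 0; first by rewrite p0 !mulr0.
    have : (t1 - t2) *: v0 == 0 by rewrite scalerBl e subrr.
    by rewrite scaler_eq0 (negbTE v0n) orbF subr_eq0 => /eqP ->.
  - move=> _ _ [t [-> ->]].
    have [tlt0|tgt0|->] := ltgtP t 0; last by rewrite scale0r mul0r p0.
      have h1 := sub v0 (- v0); rewrite addrN p0 in h1.
      have h2 := hom (- t) (- v0); rewrite oppr_gt0 in h2; have {}h2 := h2 tlt0.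
      rewrite scalerN scaleNr opprK in h2.
      have : - t * (- p v0) <= - t * p (- v0).
        by rewrite ler_pM2l ?oppr_gt0 //; lra.
      move=> h3; rewrite mulrNN in h3; exact: le_trans h3 h2.
    exact: (hom t v0 tgt0).
  - by right; exists 1; rewrite scale1r mul1r.
have Av0 : A (v0, p v0).
  case: h0 => // A0; exfalso; apply: (hmax G0) => //; rewrite A0; split => //.
  by move=> /(_ (v0, p v0)) h; apply: h; exists 1; rewrite scale1r mul1r.
have A00 := g00 A v0 (p v0) hl Av0.
have tot : forall w, exists r, A (w, r).
  move=> w; apply: contrapT => hw.
  have [B [AB [hlB [hfB hdB]]]] := extend_step p A sub hom hl hf hd A00 w hw.
  apply: (hmax B AB); split; [|split; [|split]] => //.
  by right; apply: AB.1.
have [f hfA] := choice tot.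
exists f; split; [|split].
- move=> a u v; apply: (hf _ _ _ (hfA _)); exact: hl (hfA u) (hfA v).
- by move=> v; apply: hd.
- exact: (hf _ _ _ (hfA _) Av0).
Qed.

Lemma lin0 {R : realType} {X : normedModType R} {f : X -> R} :
  (forall a u v, f (a *: u + v) = a * f u + f v) -> f 0 = 0.
Proof.
move=> hf; have := hf 1 0 0; rewrite scale1r addr0 mul1r => h; lra.
Qed.

Lemma linZ {R : realType} {X : normedModType R} {f : X -> R} :
  (forall a u v, f (a *: u + v) = a * f u + f v) -> forall a u, f (a *: u) = a * f u.
Proof. by move=> hf a u; have := hf a u 0; rewrite addr0 (lin0 hf) addr0. Qed.

Lemma linB {R : realType} {X : normedModType R} {f : X -> R} :
  (forall a u v, f (a *: u + v) = a * f u + f v) -> forall u v, f (u - v) = f u - f v.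
Proof.
by move=> hf u v; rewrite addrC -scaleN1r hf mulN1r addrC.
Qed.

Lemma dual_bound {R : realType} {X : normedModType R} {f : X -> R} :
  is_dual_elt f -> dual_norm f = 1 -> forall z, f z <= `|z|.
Proof.
move=> [hf _] h1 z.
have hs : has_sup [set `|f z| | z in [set z : X | `|z| <= 1]].
  apply: contrapT => hs; move: h1; rewrite /dual_norm sup_out //.
  by move/eqP; rewrite eq_sym oner_eq0.
have [->|z0] := eqVneq z 0; first by rewrite (lin0 hf) normr0.
have nz : 0 < `|z| by rewrite normr_gt0.
have hu : `|f (`|z|^-1 *: z)| <= 1.
  rewrite -h1; apply: sup_upper_bound => //; exists (`|z|^-1 *: z) => //.
  rewrite /= normrZ ger0_norm ?invr_ge0 ?normr_ge0 // mulVf ?gt_eqF //.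
rewrite (linZ hf) normrM ger0_norm ?invr_ge0 ?normr_ge0 // in hu.
have : f z <= `|f z| by exact: ler_norm.
move: hu; rewrite -(ler_pM2l nz) mulrA mulfV ?gt_eqF // mul1r mulr1.
move=> h h'; exact: le_trans h' h.
Qed.

Lemma norming {R : realType} {X : normedModType R} (f : X -> R) (z : X) :
  (forall a u v, f (a *: u + v) = a * f u + f v) ->
  (forall v, f v <= `|v|) -> z != 0 -> f z = `|z| -> subdiff_norm z f.
Proof.
move=> hf hle z0 fz.
have habs v : `|f v| <= `|v|.
  rewrite ler_norml hle andbT lerNl -mulN1r -(linZ hf) scaleN1r.
  by rewrite -[X in _ <= X]normrN; exact: hle.
have nz : 0 < `|z| by rewrite normr_gt0.
split => //; split; first split => //.
- move=> x; apply/cvgrPdist_lt => e e0; near=> y.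
  rewrite -(linB hf); apply: le_lt_trans (habs _) _; near: y.
  exact: (@cvgr_dist_lt _ _ _ (nbhs x) _ id x cvg_id e e0).
- rewrite /dual_norm; apply/eqP; rewrite eq_le; apply/andP; split.
    apply: ge_sup; first by exists `|f 0|, 0 => //=; rewrite normr0.
    by move=> _ [v /= v1 <-]; exact: le_trans (habs v) v1.
  apply: ub_le_sup.
    by exists 1 => _ [v /= v1 <-]; exact: le_trans (habs v) v1.
  exists (`|z|^-1 *: z).
    by rewrite /= normrZ ger0_norm ?invr_ge0 ?normr_ge0 // mulVf ?gt_eqF.
  by rewrite (linZ hf) fz mulVf ?gt_eqF // normr1.
Unshelve. all: by end_near.
Qed.

Definition qf {R : realType} {X : normedModType R} (a : X) (v : X) : R :=
  inf [set `|v - l *: a| | l in [set l : R | 0 <= l]].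

Lemma qf_le {R : realType} {X : normedModType R} (a v : X) {l : R} :
  0 <= l -> qf a v <= `|v - l *: a|.
Proof.
move=> l0; apply: ge_inf; last by exists l.
by exists 0 => _ [l' _ <-]; exact: normr_ge0.
Qed.

Lemma qf_ge {R : realType} {X : normedModType R} (a v : X) (c : R) :
  (forall l, 0 <= l -> c <= `|v - l *: a|) -> c <= qf a v.
Proof.
move=> h; apply: lb_le_inf; first by exists `|v - 0 *: a|; exists 0 => //=.
by move=> _ [l l0 <-]; exact: h.
Qed.

Lemma qf_sub {R : realType} {X : normedModType R} (a u v : X) :
  qf a (u + v) <= qf a u + qf a v.
Proof.
have h1 l2 : 0 <= l2 -> qf a (u + v) - `|v - l2 *: a| <= qf a u.
  move=> l2p; apply: qf_ge => l1 l1p.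
  have := qf_le a (u + v) (addr_ge0 l1p l2p : 0 <= l1 + l2).
  have -> : u + v - (l1 + l2) *: a = (u - l1 *: a) + (v - l2 *: a).
    by rewrite scalerDl opprD addrACA.
  have := ler_normD (u - l1 *: a) (v - l2 *: a); lra.
have h2 : qf a (u + v) - qf a u <= qf a v.
  apply: qf_ge => l2 l2p; have := h1 _ l2p; lra.
lra.
Qed.

Lemma qf_hom {R : realType} {X : normedModType R} (a : X) (t : R) (u : X) :
  0 < t -> t * qf a u <= qf a (t *: u).
Proof.
move=> t0; apply: qf_ge => l l0.
have -> : t *: u - l *: a = t *: (u - (t^-1 * l) *: a).
  by rewrite scalerBr scalerA mulrA mulfV ?gt_eqF // mul1r.
rewrite normrZ gtr0_norm // ler_pM2l //; apply: qf_le.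
by rewrite mulr_ge0 // invr_ge0 ltW.
Qed.

Lemma mono_ball {R : realType} {X : normedModType R} (x a : X) (t s : R) :
  `|x| = 1 -> 0 < t -> t <= s -> `|t *: x - a| < t -> `|s *: x - a| < s.
Proof.
move=> x1 t0 ts h.
have -> : s *: x - a = (s - t) *: x + (t *: x - a).
  by rewrite addrA -scalerDl subrK.
have := ler_normD ((s - t) *: x) (t *: x - a).
rewrite normrZ x1 mulr1 ger0_norm ?subr_ge0 //; lra.
Qed.

Lemma nat_bound (s : seq nat) : exists N, forall n, n \in s -> (n <= N)%N.
Proof.
elim: s => [|k s [N hN]]; first by exists 0%N.
exists (maxn k N) => n; rewrite in_cons => /orP[/eqP ->|/hN h].
  exact: leq_maxl.
exact: leq_trans h (leq_maxr _ _).
Qed.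

Lemma norm_sub {R : realType} {X : normedModType R} (u v : X) :
  `|u + v| <= `|u| + `|v|.
Proof. exact: ler_normD. Qed.

Lemma norm_hom {R : realType} {X : normedModType R} (t : R) (u : X) :
  0 < t -> t * `|u| <= `|t *: u|.
Proof. by move=> t0; rewrite normrZ gtr0_norm. Qed.

Theorem mainTheorem8 (R : realType) (X : completeNormedModType R)
    (A : set X) (m : nat) (I : finType) (x : I -> X) :
  compact A -> ~ A 0 -> #|I|%N = m ->
  (forall i, `|x i| = 1) ->
  ((exists (y : I -> X) (r : I -> R),
      (forall i, exists t : R, 0 < t /\ y i = t *: x i) /\
      (forall i, 0 < r i /\ r i <= `|y i|) /\
      A `<=` \bigcup_(i in [set: I]) oball (y i) (r i))
   <->
   (forall phi : X -> X -> R, subdiff_selection phi ->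
      forall a, A a -> exists i : I, 0 < phi (x i) a)).
Proof.
move=> cA nA0 _ x1.
have xn0 i : x i != 0 by rewrite -normr_eq0 x1 oner_eq0.
split.
  move=> [y [r [hy [hr hcov]]]] phi sel a Aa.
  have [i _ hi] := hcov a Aa.
  exists i.
  have [[hdual hdn] fx] := sel _ (xn0 i).
  have [hlin _] := hdual.
  have [t [t0 yi]] := hy i.
  have [r0 ry] := hr i.
  have hb := dual_bound hdual hdn.
  have := hb (y i - a); rewrite (linB hlin) yi (linZ hlin) fx x1 mulr1.
  move: ry hi; rewrite /oball /= yi normrZ x1 mulr1 gtr0_norm // => ry hi h.
  lra.
move=> H.
have claim : forall a, A a -> exists i t, 0 < t /\ `|t *: x i - a| < t.
  move=> a Aa; apply: contrapT => hn.
  have hge i l : 0 <= l -> 1 <= `|x i - l *: a|.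
    move=> l0; have [->|lp] := eqVneq l 0; first by rewrite scale0r subr0 x1.
    have lgt : 0 < l by rewrite lt_neqAle eq_sym lp.
    have h : l^-1 <= `|l^-1 *: x i - a|.
      rewrite leNgt; apply/negP => hlt; apply: hn; exists i, l^-1.
      by rewrite invr_gt0.
    have -> : x i - l *: a = l *: (l^-1 *: x i - a).
      by rewrite scalerBr scalerA mulfV ?gt_eqF // scale1r.
    rewrite normrZ gtr0_norm // -(mulfV lp) ler_pM2l //.
  have sel : forall z : X, exists g : X -> R,
      (z != 0 -> subdiff_norm z g) /\ ((exists i, z = x i) -> g a <= 0).
    move=> z.
    have [[i ->]|nz] := pselect (exists i, z = x i).
      have [g [gl [gq gz]]] := hahn_banach (qf a) (qf_sub a) (qf_hom a) (x i).
      have gle v : g v <= `|v|.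
        apply: le_trans (gq v) _; have := qf_le a v (lexx 0).
        by rewrite scale0r subr0.
      have qx : qf a (x i) = 1.
        apply/eqP; rewrite eq_le; apply/andP; split.
          by have := qf_le a (x i) (lexx 0); rewrite scale0r subr0 x1.
        by apply: qf_ge => l l0; exact: hge.
      exists g; split.
        by move=> _; apply: norming => //; rewrite gz qx x1.
      move=> _; apply: le_trans (gq a) _.
      by have := qf_le a a ler01; rewrite scale1r subrr normr0.
    have [g [gl [gq gz]]] := hahn_banach (fun v : X => `|v|) (@norm_sub R X) (@norm_hom R X) z.
    exists g; split; first by move=> z0; exact: norming.
    by move=> hz; exfalso; exact: nz.
  have [phi hphi] := choice sel.
  have [i hi] := H phi (fun z z0 => (hphi z).1 z0) a Aa.
  have := (hphi (x i)).2 (ex_intro _ i erefl); lra.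
pose U (n : nat) := \bigcup_(i in [set: I]) ball (n.+1%:R *: x i) (n.+1%:R : R).
have Uopen n : [set: nat] n -> open (U n).
  by move=> _; apply: bigcup_open => i _; exact: ball_open.
have Ucov : A `<=` cover [set: nat] U.
  move=> a Aa; have [i [t [t0 ht]]] := claim a Aa.
  have tb := archi_boundP (ltW t0).
  exists (Num.Def.archi_bound t) => //; exists i => //.
  rewrite -ball_normE /=; apply: mono_ball (x1 i) t0 _ ht.
  by rewrite ltW // (lt_le_trans tb) // ler_nat.
move: cA; rewrite compact_cover => /(_ nat [set: nat] U Uopen Ucov) [D' _ hD'].
have [N hN] := nat_bound (finmap.enum_fset D').
exists (fun i => N.+1%:R *: x i), (fun _ => N.+1%:R).
split; [|split].
- by move=> i; exists N.+1%:R.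
- by move=> i; rewrite normrZ x1 mulr1 ger0_norm.
move=> a Aa; have [n /= nD [i _ hi]] := hD' a Aa.
exists i => //; rewrite /oball /=.
move: hi; rewrite -ball_normE /= => hi.
apply: mono_ball (x1 i) _ _ hi => //.
by rewrite ler_nat ltnS; exact: hN.
Qed.
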